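(* ${\rm Eigen}(\sigma_{\varphi,\mathfrak{w}},V^\Gamma)=\bigcup\{{\rm Eigen}(\sigma_{\varphi\restriction_{\frac\alpha\sim},\mathfrak{w}^{\frac\alpha\sim}},V^{\frac\alpha\sim}):\alpha\in\Gamma\}$.
   Context: $V$ is a vector space over a field $F$, $\Gamma$ a nonempty set, $\varphi:\Gamma\to\Gamma$ a self-map, and $\mathfrak{w}=(\mathfrak{w}_\alpha)_{\alpha\in\Gamma}\in F^\Gamma$. The weighted generalized shift is $\sigma_{\varphi,\mathfrak{w}}:V^\Gamma\to V^\Gamma$, $(x_\alpha)_{\alpha\in\Gamma}\mapsto(\mathfrak{w}_\alpha x_{\varphi(\alpha)})_{\alpha\in\Gamma}$. For nonempty $D\subseteq\Gamma$, $\mathfrak{w}^D:=(\mathfrak{w}_\alpha)_{\alpha\in D}$. The relation $\sim$ on $\Gamma$ is defined by $\alpha\sim\beta$ iff there exist $n,m\geq1$ with $\varphi^n(\alpha)=\varphi^m(\beta)$; it is an equivalence relation and $\frac{\alpha}{\sim}$ denotes the equivalence class of $\alpha$ (which is mapped into itself by $\varphi$). For a linear map $T:W\to W$, ${\rm Eigen}(T,W)$ is the set of all $r\in F$ such that $T(x)=rx$ for some nonzero $x\in W$. *)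

(* Defs.v *)
From HB Require Import structures.
From mathcomp Require Import all_boot all_order all_algebra.
Set Implicit Arguments. Unset Strict Implicit. Unset Printing Implicit Defensive.
Import GRing.Theory.
Local Open Scope ring_scope.

Section WGS.
Variables (F : fieldType) (V : lmodType F).

Definition wshift (G : Type) (phi : G -> G) (w : G -> F) (x : G -> V) : G -> V :=
  fun a => w a *: x (phi a).

Definition Eigen (G : Type) (T : (G -> V) -> (G -> V)) (r : F) : Prop :=
  exists x : G -> V, x <> (fun _ => 0) /\ T x = (fun a => r *: x a).
End WGS.

Definition sim (G : Type) (phi : G -> G) (a b : G) : Prop :=
  exists n m : nat, (0 < n)%N /\ (0 < m)%N /\ iter n phi a = iter m phi b.

Definition cls (G : Type) (phi : G -> G) (a : G) : Type := {b : G | sim phi a b}.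

Lemma sim_phi (G : Type) (phi : G -> G) (a b : G) :
  sim phi a b -> sim phi a (phi b).
Proof.
case=> n [m [Hn [Hm E]]]; exists n.+1, m; split => //; split => //.
by rewrite iterS E -iterS iterSr.
Qed.

Definition phi_res (G : Type) (phi : G -> G) (a : G) (b : cls phi a) : cls phi a :=
  exist _ (phi (proj1_sig b)) (sim_phi (proj2_sig b)).

Definition w_res (F : Type) (G : Type) (phi : G -> G) (w : G -> F) (a : G)
  (b : cls phi a) : F := w (proj1_sig b).

(* Main.v *)
Require Import Defs.
From HB Require Import structures.
From mathcomp Require Import all_boot all_order all_algebra.
From Stdlib Require Import Classical ClassicalEpsilon FunctionalExtensionality ProofIrrelevance.
Import GRing.Theory.
Local Open Scope ring_scope.

Lemma nz_point (T : Type) (U : zmodType) (x : T -> U) :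
  x <> (fun _ => 0) -> exists t, x t <> 0.
Proof.
move=> H; apply: NNPP => H'; apply: H; apply: functional_extensionality => t.
by apply: NNPP => Ht; apply: H'; exists t.
Qed.

Theorem lemma2p4 (F : fieldType) (V : lmodType F) (G : Type) (HG : inhabited G)
  (phi : G -> G) (w : G -> F) :
  forall r : F,
    Eigen (wshift (V := V) phi w) r <->
    exists a : G, Eigen (wshift (V := V) (@phi_res G phi a) (@w_res F G phi w a)) r.
Proof.
move=> r; split.
- case=> x [Hx E].
  have [a0 Ha0] := @nz_point _ _ x Hx.
  exists a0; exists (fun b : cls phi a0 => x (proj1_sig b)); split.
    move=> E0; apply: Ha0.
    have Hs : sim phi a0 a0 by exists 1%N, 1%N.
    by have := equal_f E0 (exist _ a0 Hs).
  apply: functional_extensionality => b /=.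
  by have := equal_f E (proj1_sig b).
- case=> a [y [Hy E]].
  pose x := fun b : G => match excluded_middle_informative (sim phi a b) with
                         | left h => y (exist _ b h) | right _ => 0 end.
  exists x; split.
    have [b0 Hb0] := @nz_point _ _ y Hy.
    move=> E0; apply: Hb0; have := equal_f E0 (proj1_sig b0).
    rewrite /x; case: excluded_middle_informative => [h|h].
      case: b0 {E0} => b hb /= in h *.
      by rewrite (proof_irrelevance _ h hb).
    by case: b0 {E0} => b hb /= in h *.
  apply: functional_extensionality => b; rewrite /wshift /x.
  case: excluded_middle_informative => [h|h];
    case: excluded_middle_informative => [h'|h'].
  + have := equal_f E (exist _ b h'); rewrite /wshift /w_res /phi_res /=.
    by rewrite (proof_irrelevance _ h (sim_phi h')).
  + by case: h'; case: h => n [m [Hn [Hm Em]]]; exists n, m.+1; rewrite iterSr.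
  + by case: h; apply: sim_phi.
  + by rewrite !scaler0.
Qed.
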